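(* Let $G$ be a Hausdorff topological group and $d\ge 1$ an integer. Then $M(G)$ has exactly $d$ points if and only if $G$ has an extremely amenable, open, normal subgroup of index $d$.
   Context: A $G$-flow is a continuous action of $G$ on a compact Hausdorff space; $M(G)$ denotes the universal minimal $G$-flow (the minimal $G$-flow admitting a continuous $G$-equivariant map onto every minimal $G$-flow, unique up to isomorphism). A topological group $H$ is extremely amenable if every $H$-flow has a fixed point. *)

(* Defs.v *)
From Stdlib Require Import List Arith Classical.
Import ListNotations.

Record Topology (X : Type) := {
  is_open : (X -> Prop) -> Prop;
  open_all : is_open (fun _ => True);
  open_inter : forall U V, is_open U -> is_open V -> is_open (fun x => U x /\ V x);
  open_union : forall F : (X -> Prop) -> Prop,
      (forall U, F U -> is_open U) -> is_open (fun x => exists U, F U /\ U x)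
}.
Arguments is_open {X} _ _.

Definition is_closed {X : Type} (T : Topology X) (A : X -> Prop) : Prop :=
  is_open T (fun x => ~ A x).

Definition compact {X : Type} (T : Topology X) : Prop :=
  forall F : (X -> Prop) -> Prop,
    (forall U, F U -> is_open T U) ->
    (forall x, exists U, F U /\ U x) ->
    exists l : list (X -> Prop),
      (forall U, In U l -> F U) /\ (forall x, exists U, In U l /\ U x).

Definition hausdorff {X : Type} (T : Topology X) : Prop :=
  forall x y : X, x <> y ->
    exists U V, is_open T U /\ is_open T V /\ U x /\ V y /\
                (forall z, U z -> V z -> False).

Definition continuous {X Y : Type} (TX : Topology X) (TY : Topology Y)
  (f : X -> Y) : Prop :=
  forall W, is_open TY W -> is_open TX (fun x => W (f x)).

(* Hausdorff topological groups. Continuity of multiplication is continuity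
   for the product topology on G x G, written out with basic open boxes. *)
Record TopGroup := {
  tg :> Type;
  mul : tg -> tg -> tg;
  inv : tg -> tg;
  one : tg;
  top : Topology tg;
  mulA : forall x y z, mul x (mul y z) = mul (mul x y) z;
  mul1g : forall x, mul one x = x;
  mulVg : forall x, mul (inv x) x = one;
  mul_cont : forall x y W, is_open top W -> W (mul x y) ->
     exists U V, is_open top U /\ is_open top V /\ U x /\ V y /\
       (forall x' y', U x' -> V y' -> W (mul x' y'));
  inv_cont : continuous top top inv;
  tg_hausdorff : hausdorff top
}.
Arguments mul {_} _ _.
Arguments inv {_} _.
Arguments one {_}.

(* A flow of the subgroup S of G (S = the whole of G for G-flows): a nonempty
   compact Hausdorff space X with a jointly continuous action of S
   (S carrying the subspace topology). The action map is given on all of G but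
   only its restriction to S is constrained. *)
Definition is_flow (G : TopGroup) (S : G -> Prop) (X : Type) (T : Topology X)
  (act : G -> X -> X) : Prop :=
  inhabited X /\ compact T /\ hausdorff T /\
  (forall x, act one x = x) /\
  (forall g h x, S g -> S h -> act (mul g h) x = act g (act h x)) /\
  (forall g x W, S g -> is_open T W -> W (act g x) ->
     exists U V, is_open (top G) U /\ is_open T V /\ U g /\ V x /\
       (forall g' x', S g' -> U g' -> V x' -> W (act g' x'))).

Definition G_flow (G : TopGroup) := is_flow G (fun _ => True).

Definition minimal_flow (G : TopGroup) (X : Type) (T : Topology X)
  (act : G -> X -> X) : Prop :=
  G_flow G X T act /\
  forall A : X -> Prop, is_closed T A -> (exists x, A x) ->
    (forall g x, A x -> A (act g x)) -> forall x, A x.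

Definition universal_minimal_flow (G : TopGroup) (X : Type) (T : Topology X)
  (act : G -> X -> X) : Prop :=
  minimal_flow G X T act /\
  forall (Y : Type) (TY : Topology Y) (actY : G -> Y -> Y),
    minimal_flow G Y TY actY ->
    exists f : X -> Y, continuous T TY f /\
      (forall g x, f (act g x) = actY g (f x)) /\
      (forall y, exists x, f x = y).

Definition has_card (X : Type) (d : nat) : Prop :=
  exists l : list X, NoDup l /\ length l = d /\ forall x, In x l.

Definition UMF_card (G : TopGroup) (d : nat) : Prop :=
  exists (X : Type) (T : Topology X) (act : G -> X -> X),
    universal_minimal_flow G X T act /\ has_card X d.

Definition subgroup (G : TopGroup) (H : G -> Prop) : Prop :=
  H one /\ (forall x y, H x -> H y -> H (mul x y)) /\ (forall x, H x -> H (inv x)).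

Definition normal (G : TopGroup) (H : G -> Prop) : Prop :=
  forall g h, H h -> H (mul (mul g h) (inv g)).

Definition index_eq (G : TopGroup) (H : G -> Prop) (d : nat) : Prop :=
  exists l : list G, length l = d /\
    (forall g, exists r, In r l /\ H (mul (inv r) g)) /\
    (forall i j, i < d -> j < d ->
       H (mul (inv (nth i l one)) (nth j l one)) -> i = j).

Definition extremely_amenable (G : TopGroup) (H : G -> Prop) : Prop :=
  forall (X : Type) (T : Topology X) (act : G -> X -> X),
    is_flow G H X T act -> exists x, forall h, H h -> act h x = x.

(* Main.v *)
Require Import Defs.
From Stdlib Require Import List Arith Classical ClassicalEpsilon ProofIrrelevance FunctionalExtensionality PropExtensionality FinFun Lia.
From mathcomp Require classical_sets boolp.
Import ListNotations.

Section Grp.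
Variable G : TopGroup.
Lemma mulg_left_cancel (a x y : G) : mul a x = mul a y -> x = y.
Proof.
  intro E. rewrite <- (mul1g G x), <- (mul1g G y), <- (mulVg G a), <- !mulA, E. reflexivity.
Qed.
Lemma idem_one (e : G) : mul e e = e -> e = one.
Proof.
  intro E. rewrite <- (mul1g G e) at 1. rewrite <- (mulVg G e), <- mulA, E, mulVg. reflexivity.
Qed.
Lemma mulgV (x : G) : mul x (inv x) = one.
Proof.
  apply idem_one. rewrite <- mulA, (mulA _ (inv x) x), mulVg, mul1g. reflexivity.
Qed.
Lemma mulg1 (x : G) : mul x one = x.
Proof. rewrite <- (mulVg G x), mulA, mulgV, mul1g. reflexivity. Qed.
Lemma invK (x : G) : inv (inv x) = x.
Proof. apply (mulg_left_cancel (inv x)). rewrite mulgV, mulVg. reflexivity. Qed.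
Lemma invM (x y : G) : inv (mul x y) = mul (inv y) (inv x).
Proof.
  apply (mulg_left_cancel (mul x y)). rewrite mulgV, mulA, <- (mulA _ x y), mulgV, mulg1, mulgV.
  reflexivity.
Qed.
Lemma inv1 : inv (one : G) = one.
Proof. rewrite <- (mulg1 (inv one)), mulVg. reflexivity. Qed.
End Grp.
Arguments mulg_left_cancel {G}. Arguments mulgV {G}. Arguments mulg1 {G}.
Arguments invK {G}. Arguments invM {G}. Arguments inv1 {G}.

Lemma open_local {X} (T : Topology X) (P : X -> Prop) :
  (forall x, P x -> exists V, is_open T V /\ V x /\ forall y, V y -> P y) -> is_open T P.
Proof.
  intro H.
  assert (E : P = (fun x => exists U, (is_open T U /\ forall y, U y -> P y) /\ U x)).
  { apply functional_extensionality; intro x; apply propositional_extensionality; split.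
    - intro Px. destruct (H x Px) as [V [HV [Vx HVP]]]. exists V; auto.
    - intros [U [[_ HU] Ux]]. auto. }
  rewrite E. apply open_union. intros U [HU _]; exact HU.
Qed.

Lemma open_ext {X} (T : Topology X) (P Q : X -> Prop) :
  (forall x, P x <-> Q x) -> is_open T P -> is_open T Q.
Proof.
  intros H HP. replace Q with P; auto.
  apply functional_extensionality; intro; apply propositional_extensionality; auto.
Qed.

Lemma open_empty {X} (T : Topology X) : is_open T (fun _ => False).
Proof. apply open_local. intros x []. Qed.

Definition discrete (X : Type) : Topology X.
Proof.
  refine {| is_open := fun _ => True |}; auto.
Defined.

Lemma compact_of_list {X} (T : Topology X) (l : list X) :
  (forall x, In x l) -> compact T.
Proof.
  intros Hl F _ Fcov.
  assert (forall l0 : list X, exists lu, (forall U, In U lu -> F U) /\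
                               forall x, In x l0 -> exists U, In U lu /\ U x) as Hgen.
  { induction l0 as [|a l0 IH].
    - exists []. split; [intros U []| intros x []].
    - destruct IH as [lu [H1 H2]]. destruct (Fcov a) as [Ua [FUa Uaa]].
      exists (Ua :: lu). split.
      + intros U [<-|HU]; auto.
      + intros x [<-|Hx].
        * exists Ua; split; [left; auto|auto].
        * destruct (H2 x Hx) as [U [HU Ux]]. exists U; split; [right; auto|auto]. }
  destruct (Hgen l) as [lu [H1 H2]]. exists lu. split; auto.
Qed.

Lemma sep_list {X} (T : Topology X) (hT : hausdorff T) (y : X) (L : list X) :
  (forall z, In z L -> z <> y) ->
  exists V, is_open T V /\ V y /\ forall z, In z L -> ~ V z.
Proof.
  induction L as [|a L IH]; intro HL.
  - exists (fun _ => True). split; [apply open_all|]. split; auto.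
  - destruct IH as [V [HV [Vy HVL]]]. { intros z Hz; apply HL; right; auto. }
    destruct (hT a y) as [U1 [U2 [HU1 [HU2 [U1a [U2y Hd]]]]]]. { apply HL; left; auto. }
    exists (fun x => V x /\ U2 x). split; [apply open_inter; auto|]. split; [auto|].
    intros z [Ez|Hz] [Vz U2z].
    + subst z. exact (Hd a U1a U2z).
    + exact (HVL z Hz Vz).
Qed.

Lemma finite_points_open {X} (T : Topology X) (hT : hausdorff T) (l : list X) :
  (forall x, In x l) -> forall P : X -> Prop, is_open T P.
Proof.
  intros Hl P. apply open_local. intros x Px.
  destruct (sep_list T hT x (filter (fun z => if excluded_middle_informative (z = x) then false else true) l))
    as [V [HV [Vx HVL]]].
  { intros z Hz. apply filter_In in Hz. destruct Hz as [_ Hz].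
    destruct (excluded_middle_informative (z = x)); [discriminate|auto]. }
  exists V. split; auto. split; auto. intros y Vy.
  destruct (classic (y = x)) as [->|Hne]; auto.
  exfalso. apply (HVL y); auto. apply filter_In. split; auto.
  destruct (excluded_middle_informative (y = x)); [contradiction|auto].
Qed.

Lemma finite_closed {X} (T : Topology X) (hT : hausdorff T) (L : list X) :
  is_closed T (fun y => In y L).
Proof.
  unfold is_closed. apply open_local. intros y Hy.
  destruct (sep_list T hT y L) as [V [HV [Vy HVL]]].
  { intros z Hz ->. contradiction. }
  exists V. split; auto. split; auto. intros z Vz Hz. exact (HVL z Hz Vz).
Qed.

Lemma sig_eq {A} {P : A -> Prop} (x y : {a | P a}) : proj1_sig x = proj1_sig y -> x = y.
Proof. destruct x, y; simpl; intros ->; f_equal; apply proof_irrelevance. Qed.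

Lemma mul_cancel_mid {G : TopGroup} (a y b : G) : mul (mul a y) (mul (inv y) b) = mul a b.
Proof. rewrite mulA, <- (mulA _ a y), mulgV, mulg1. reflexivity. Qed.

Lemma open_left_trans (G : TopGroup) (a : G) (P : G -> Prop) :
  is_open (top G) P -> is_open (top G) (fun g => P (mul a g)).
Proof.
  intro HP. apply open_local. intros g Hg.
  destruct (mul_cont G a g P HP Hg) as [U [V [_ [HV [Ua [Vg HUV]]]]]].
  exists V. split; auto.
Qed.

Section Coset.
Variables (G : TopGroup) (H : G -> Prop) (d : nat) (l : list G).
Hypotheses (Hsub : subgroup G H) (Hlen : length l = d)
  (Hcov : forall g, exists r, In r l /\ H (mul (inv r) g))
  (Hdis : forall i j, i < d -> j < d -> H (mul (inv (nth i l one)) (nth j l one)) -> i = j).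

Definition rr (i : nat) : G := nth i l one.

Lemma H1 : H one. Proof. apply Hsub. Qed.
Lemma HM x y : H x -> H y -> H (mul x y). Proof. apply Hsub. Qed.
Lemma HV x : H x -> H (inv x). Proof. apply Hsub. Qed.

Lemma pick_ex a : exists k, k < d /\ H (mul (inv (rr k)) a).
Proof.
  destruct (Hcov a) as [r [Hr Ha]]. destruct (In_nth l r one Hr) as [k [Hk Ek]].
  exists k. unfold rr. rewrite Ek. split; auto. lia.
Qed.

Lemma pick_uniq a i j : i < d -> j < d -> H (mul (inv (rr i)) a) -> H (mul (inv (rr j)) a) -> i = j.
Proof.
  intros Hi Hj Hia Hja. apply Hdis; auto.
  replace (mul (inv (nth i l one)) (nth j l one)) with (mul (mul (inv (rr i)) a) (inv (mul (inv (rr j)) a))).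
  - apply HM; auto. apply HV; auto.
  - rewrite invM, invK. unfold rr. rewrite mul_cancel_mid. reflexivity.
Qed.

Definition pick (a : G) : nat := proj1_sig (constructive_indefinite_description _ (pick_ex a)).
Lemma pick_spec a : pick a < d /\ H (mul (inv (rr (pick a))) a).
Proof. unfold pick. destruct constructive_indefinite_description; auto. Qed.
Lemma pick_lt a : pick a < d. Proof. apply pick_spec. Qed.
Lemma pick_H a : H (mul (inv (rr (pick a))) a). Proof. apply pick_spec. Qed.
Lemma pick_eq a k : k < d -> H (mul (inv (rr k)) a) -> pick a = k.
Proof. intros. apply (pick_uniq a); auto; apply pick_spec. Qed.

Lemma pick_comp g a : pick (mul g (rr (pick a))) = pick (mul g a).
Proof.
  symmetry. apply pick_eq. apply pick_lt.
  set (m := pick a). set (k := pick (mul g (rr m))).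
  replace (mul (inv (rr k)) (mul g a)) with
    (mul (mul (inv (rr k)) (mul g (rr m))) (mul (inv (rr m)) a)).
  - apply HM; [apply pick_H| apply pick_H].
  - rewrite <- (mulA _ (inv (rr k))), mul_cancel_mid, mulA. reflexivity.
Qed.

Lemma pick_rr i : i < d -> pick (rr i) = i.
Proof. intro Hi. apply pick_eq; auto. rewrite mulVg. apply H1. Qed.

End Coset.

Lemma fin_list (d : nat) : exists lX : list {i | i < d}, NoDup lX /\ length lX = d /\ forall x, In x lX.
Proof.
  assert (forall n, n <= d -> exists lX : list {i | i < d}, NoDup lX /\ length lX = n /\
            forall x, proj1_sig x < n <-> In x lX) as Hg.
  { induction n as [|n IH]; intro Hn.
    - exists []. split; [constructor|]. split; auto. intros x; split; [lia|intros []].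
    - destruct (IH ltac:(lia)) as [lX [N [L F]]].
      assert (Hnd : n < d) by lia.
      exists (exist _ n Hnd :: lX). split; [|split].
      + constructor; auto. intro Hin. apply F in Hin. simpl in Hin. lia.
      + simpl; auto.
      + intro x. split.
        * intro Hx. destruct (Nat.eq_dec (proj1_sig x) n) as [E|E].
          -- left. apply sig_eq. simpl. auto.
          -- right. apply F. lia.
        * intros [<-|Hx]; simpl; [lia|]. apply F in Hx. lia. }
  destruct (Hg d (le_n d)) as [lX [N [L F]]]. exists lX. split; auto. split; auto.
  intro x. apply F. apply (proj2_sig x).
Qed.

Lemma discrete_hausdorff X : hausdorff (discrete X).
Proof.
  intros x y Hxy. exists (fun z => z = x), (fun z => z = y).
  repeat split; auto. intros z -> ->. auto.
Qed.

Section Backward.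
Variables (G : TopGroup) (H : G -> Prop) (d : nat) (l : list G).
Hypotheses (hd : 1 <= d) (Hsub : subgroup G H) (Hlen : length l = d)
  (Hcov : forall g, exists r, In r l /\ H (mul (inv r) g))
  (Hdis : forall i j, i < d -> j < d -> H (mul (inv (nth i l one)) (nth j l one)) -> i = j)
  (Hopen : is_open (top G) H) (Hnorm : normal G H) (Hea : extremely_amenable G H).

Let pk := pick G H d l Hlen Hcov.
Let pcomp := pick_comp G H d l Hsub Hlen Hcov Hdis.
Let peq := pick_eq G H d l Hsub Hlen Hcov Hdis.
Let prr := pick_rr G H d l Hsub Hlen Hcov Hdis.
Let pH := pick_H G H d l Hlen Hcov.
Let plt := pick_lt G H d l Hlen Hcov.
Let r := rr G l.
Definition Xc := {i | i < d}.
Definition actc (g : G) (x : Xc) : Xc :=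
  exist _ (pk (mul g (r (proj1_sig x)))) (plt _).

Lemma actc_flow : G_flow G Xc (discrete Xc) actc.
Proof.
  destruct (fin_list d) as [lX [N [L F]]].
  split; [|split; [|split; [|split; [|split]]]].
  - constructor. exists 0. lia.
  - apply (compact_of_list _ lX F).
  - apply discrete_hausdorff.
  - intro x. apply sig_eq. simpl. rewrite mul1g. apply prr. apply (proj2_sig x).
  - intros g h x _ _. apply sig_eq. simpl.
    unfold pk. rewrite pcomp, mulA. reflexivity.
  - intros g x W _ _ HW.
    exists (fun g' => H (mul (inv g) g')), (fun x' => x' = x).
    split; [apply open_left_trans; auto|]. split; [exact I|].
    split; [rewrite mulVg; apply Hsub|]. split; [auto|].
    intros g' x' _ Hg' ->.
    replace (actc g' x) with (actc g x); auto.
    clear HW.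
    apply sig_eq. simpl. unfold pk. symmetry.
    apply peq; [apply plt|].
    set (i := proj1_sig x). set (k := pick G H d l Hlen Hcov (mul g (r i))).
    set (h := mul (inv g) g').
    replace (mul (inv (rr G l k)) (mul g' (r i))) with
      (mul (mul (inv (rr G l k)) (mul g (r i))) (mul (inv (r i)) (mul h (r i)))).
    + apply (proj1 (proj2 Hsub)). apply pH.
      pose proof (Hnorm (inv (r i)) h Hg') as Hn. rewrite invK, <- mulA in Hn. exact Hn.
    + rewrite (mulA _ _ g (r i)), mul_cancel_mid. unfold h.
      rewrite mulA, mul_cancel_mid, <- mulA. reflexivity.
Qed.

Lemma backward : UMF_card G d.
Proof.
  pose proof actc_flow as Hfl.
  destruct (fin_list d) as [lX [N [L F]]].
  exists Xc, (discrete Xc), actc. split; [split; [split|]|].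
  - exact Hfl.
  - intros A _ [x0 Ax0] Hinv x.
    replace x with (actc (mul (r (proj1_sig x)) (inv (r (proj1_sig x0)))) x0); auto.
    apply sig_eq. simpl. rewrite <- mulA, mulVg, mulg1. apply prr. apply (proj2_sig x).
  - intros Y TY actY [HYf HYmin].
    destruct HYf as [inh [cp [hs [a1 [acomp acont]]]]].
    assert (Hres : is_flow G H Y TY actY).
    { split; [auto|split; [auto|split; [auto|split; [auto|split]]]].
      - intros g h x _ _. apply acomp; exact I.
      - intros g x W _ HW HWx. destruct (acont g x W I HW HWx) as [U [V [HU [HV [Ug [Vx HUV]]]]]].
        exists U, V. repeat split; auto. }
    destruct (Hea Y TY actY Hres) as [y0 Hy0].
    set (f := fun x : Xc => actY (r (proj1_sig x)) y0).
    assert (Heq : forall g x, f (actc g x) = actY g (f x)).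
    { intros g x. unfold f. simpl. rewrite <- acomp by exact I.
      set (i := proj1_sig x). set (k := pk (mul g (r i))).
      assert (E : actY (r k) y0 = actY (mul (r k) (mul (inv (r k)) (mul g (r i)))) y0).
      { rewrite acomp by exact I. rewrite (Hy0 (mul (inv (r k)) (mul g (r i)))); auto. apply pH. }
      rewrite mulA, mulgV, mul1g in E. exact E. }
    exists f. split; [intros W _; exact I|]. split; [exact Heq|].
    intro y. apply (HYmin (fun y => exists x, f x = y)).
    + unfold is_closed. eapply open_ext; [|apply (finite_closed TY hs (map f lX))].
      intro z. simpl. split; intros Hz Hc; apply Hz.
      * destruct Hc as [x <-]. apply in_map. apply F.
      * apply in_map_iff in Hc. destruct Hc as [x [Ex _]]. exists x; auto.
    + assert (H0 : 0 < d) by lia. exists (f (exist _ 0 H0)). exists (exist _ 0 H0). reflexivity.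
    + intros g z [x <-]. exists (actc g x). apply Heq.
  - exists lX. auto.
Qed.
End Backward.

Lemma sig_list {A} (P : A -> Prop) (L : list A) :
  (forall a, P a -> In a L) -> exists l' : list (sig P), forall o, In o l'.
Proof.
  intro HL.
  assert (forall L0, exists l' : list (sig P), forall o, In (proj1_sig o) L0 -> In o l') as Hg.
  { induction L0 as [|a L0 IH].
    - exists []. intros o [].
    - destruct IH as [l' Hl']. destruct (classic (P a)) as [Pa|nPa].
      + exists (exist _ a Pa :: l'). intros o [E|Ho].
        * left. apply sig_eq. simpl. auto.
        * right. auto.
      + exists l'. intros o [E|Ho]; auto. exfalso. apply nPa. rewrite E. apply (proj2_sig o). }
  destruct (Hg L) as [l' Hl']. exists l'. intro o. apply Hl'. apply HL. apply (proj2_sig o).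
Qed.

Section Forward1.
Variables (G : TopGroup) (X : Type) (T : Topology X) (act : G -> X -> X) (x0 : X) (lX : list X).
Hypotheses (Hfl : G_flow G X T act)
  (Hmin : forall A : X -> Prop, is_closed T A -> (exists x, A x) ->
    (forall g x, A x -> A (act g x)) -> forall x, A x)
  (Hfull : forall x, In x lX).

Lemma a1 x : act one x = x. Proof. apply Hfl. Qed.
Lemma acomp g h x : act (mul g h) x = act g (act h x). Proof. apply Hfl; exact I. Qed.
Lemma act_invl k z : act (inv k) (act k z) = z.
Proof. rewrite <- acomp, mulVg, a1. reflexivity. Qed.
Lemma act_invr k z : act k (act (inv k) z) = z.
Proof. rewrite <- acomp, mulgV, a1. reflexivity. Qed.

Lemma allopen P : is_open T P.
Proof. apply (finite_points_open T (proj1 (proj2 (proj2 Hfl))) lX Hfull). Qed.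

Lemma trans x : exists a, act a x0 = x.
Proof.
  apply (Hmin (fun x => exists a, act a x0 = x)).
  - apply allopen.
  - exists x0, one. apply a1.
  - intros g y [a <-]. exists (mul g a). apply acomp.
Qed.

Definition Hs (g : G) : Prop := act g x0 = x0.

Lemma Hs_sub : subgroup G Hs.
Proof.
  unfold Hs. split; [apply a1|split].
  - intros x y Hx Hy. rewrite acomp, Hy, Hx. reflexivity.
  - intros x Hx. rewrite <- Hx at 1. apply act_invl.
Qed.

Lemma Hs_open : is_open (top G) Hs.
Proof.
  apply open_local. intros g Hg.
  destruct (proj2 (proj2 (proj2 (proj2 (proj2 Hfl)))) g x0 (fun z => z = x0) I (allopen _) Hg)
    as [U [V [HU [HV [Ug [Vx HUV]]]]]].
  exists U. split; auto. split; auto. intros g' Ug'. apply (HUV g' x0 I Ug' Vx).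
Qed.

Lemma stab_conj y : (forall h, Hs h -> act h y = y) -> forall h, act h y = y -> Hs h.
Proof.
  intros Hy h Hh.
  set (rep := fun z => proj1_sig (constructive_indefinite_description _ (trans z))).
  assert (Hrep : forall z, act (rep z) x0 = z).
  { intro z. unfold rep. destruct constructive_indefinite_description; auto. }
  set (phi := fun z => act (rep z) y).
  assert (Hphi : forall a, phi (act a x0) = act a y).
  { intro a. unfold phi. set (b := rep (act a x0)).
    assert (Hb : Hs (mul (inv a) b)).
    { unfold Hs. rewrite acomp. unfold b. rewrite Hrep. apply act_invl. }
    replace b with (mul a (mul (inv a) b)) by (rewrite mulA, mulgV, mul1g; reflexivity).
    rewrite acomp, Hy; auto. }
  assert (Hsurj : Surjective phi).
  { intro z. destruct (trans y) as [k Hk]. destruct (trans z) as [c Hc].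
    exists (act (mul c (inv k)) x0). rewrite Hphi, <- Hk, <- acomp, <- mulA, mulVg, mulg1. auto. }
  apply Endo_Injective_Surjective in Hsurj.
  - apply Hsurj. pose proof (Hphi one) as E1. rewrite !a1 in E1. rewrite E1, Hphi. auto.
  - exists lX. exact Hfull.
  - intros u v. apply classic.
Qed.

End Forward1.

Section Forward2.
Variables (G : TopGroup) (X : Type) (T : Topology X) (act : G -> X -> X) (x0 : X) (lX : list X) (d : nat).
Hypotheses (Hfl : G_flow G X T act)
  (Hmin : forall A : X -> Prop, is_closed T A -> (exists x, A x) ->
    (forall g x, A x -> A (act g x)) -> forall x, A x)
  (Hfull : forall x, In x lX) (HN : NoDup lX) (HL : length lX = d).

Lemma Hs_index : index_eq G (Hs G X act x0) d.
Proof.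
  assert (Hreps : forall L : list X, exists l : list G, length l = length L /\
            forall i, i < length L -> act (nth i l one) x0 = nth i L x0).
  { induction L as [|a L IH].
    - exists []. split; auto. intros i Hi. simpl in Hi. lia.
    - destruct IH as [l [Hl Hn]]. destruct (trans G X T act x0 lX Hfl Hmin Hfull a) as [b Hb].
      exists (b :: l). split; [simpl; auto|]. intros [|i] Hi; simpl; auto.
      apply Hn. simpl in Hi. lia. }
  destruct (Hreps lX) as [l [Hl Hn]]. exists l. split; [lia|split].
  - intro g. destruct (In_nth lX (act g x0) x0 (Hfull _)) as [i [Hi Ei]].
    exists (nth i l one). split; [apply nth_In; lia|].
    unfold Hs. rewrite (acomp G X T act Hfl), <- Ei, <- Hn by auto. apply (act_invl G X T act Hfl).
  - intros i j Hi Hj Hij. unfold Hs in Hij.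
    apply (proj1 (NoDup_nth lX x0) HN); try lia.
    rewrite <- !Hn by lia.
    rewrite (acomp G X T act Hfl) in Hij.
    rewrite <- Hij at 1. apply (act_invr G X T act Hfl).
Qed.

End Forward2.

Section Forward3.
Variables (G : TopGroup) (X : Type) (T : Topology X) (act : G -> X -> X) (x0 : X) (lX : list X).
Hypotheses (Hfl : G_flow G X T act)
  (Hmin : forall A : X -> Prop, is_closed T A -> (exists x, A x) ->
    (forall g x, A x -> A (act g x)) -> forall x, A x)
  (Hfull : forall x, In x lX)
  (Huniv : forall (Y : Type) (TY : Topology Y) (actY : G -> Y -> Y),
    minimal_flow G Y TY actY ->
    exists f : X -> Y, continuous T TY f /\
      (forall g x, f (act g x) = actY g (f x)) /\ (forall y, exists x, f x = y)).

Let acomp' := acomp G X T act Hfl.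
Let a1' := a1 G X T act Hfl.
Let invl' := act_invl G X T act Hfl.
Let invr' := act_invr G X T act Hfl.

Section Orbit.
Variable x : X.
Definition Orb := {p : X * X | exists a, p = (act a x0, act a x)}.
Lemma actO_ok (g : G) (p : Orb) :
  exists a, (act g (fst (proj1_sig p)), act g (snd (proj1_sig p))) = (act a x0, act a x).
Proof.
  destruct p as [p [a ->]]. simpl. exists (mul g a). rewrite !acomp'. reflexivity.
Qed.
Definition actO (g : G) (p : Orb) : Orb := exist _ _ (actO_ok g p).

Lemma actO_cont_pt g y : exists U, is_open (top G) U /\ U g /\ forall g', U g' -> act g' y = act g y.
Proof.
  destruct (proj2 (proj2 (proj2 (proj2 (proj2 Hfl)))) g y (fun z => z = act g y) I
    (allopen G X T act lX Hfl Hfull _) eq_refl) as [U [V [HU [HV [Ug [Vy HUV]]]]]].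
  exists U. split; [auto|split; [auto|]]. intros g' Ug'. apply (HUV g' y I Ug' Vy).
Qed.

Lemma Orb_minimal : minimal_flow G Orb (discrete Orb) actO.
Proof.
  assert (Hx0 : exists a, (x0, x) = (act a x0, act a x)) by (exists one; rewrite !a1'; auto).
  split; [split; [|split; [|split; [|split; [|split]]]]|].
  - constructor. exact (exist _ (x0, x) Hx0).
  - destruct (sig_list (fun p : X * X => exists a, p = (act a x0, act a x)) (list_prod lX lX))
      as [lO HlO].
    + intros [p q] _. apply in_prod; auto.
    + apply (compact_of_list _ lO HlO).
  - apply discrete_hausdorff.
  - intro p. apply sig_eq. simpl. rewrite !a1'. destruct (proj1_sig p); auto.
  - intros g h p _ _. apply sig_eq. simpl. rewrite !acomp'. reflexivity.
  - intros g p W _ _ HW.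
    destruct (actO_cont_pt g (fst (proj1_sig p))) as [U1 [HU1 [U1g HU1']]].
    destruct (actO_cont_pt g (snd (proj1_sig p))) as [U2 [HU2 [U2g HU2']]].
    exists (fun g' => U1 g' /\ U2 g'), (fun q => q = p). split; [apply open_inter; auto|].
    split; [exact I|]. split; [auto|]. split; [auto|].
    intros g' q _ [U1g' U2g'] ->. replace (actO g' p) with (actO g p); auto.
    apply sig_eq. simpl. rewrite (HU1' g' U1g'), (HU2' g' U2g'). reflexivity.
  - intros A _ [q Aq] Hinv p.
    destruct q as [q [a Eq]]. destruct p as [p [b Ep]].
    assert (E : exist _ p (ex_intro _ b Ep) = actO (mul b (inv a)) (exist _ q (ex_intro _ a Eq))).
    { apply sig_eq. simpl. rewrite Ep, Eq. simpl. rewrite <- !acomp', <- mulA, mulVg, mulg1. auto. }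
    rewrite E. apply Hinv. exact Aq.
Qed.
End Orbit.

Lemma Hs_trivial : forall x h, Hs G X act x0 h -> act h x = x.
Proof.
  intros x h Hh.
  destruct (Huniv _ _ _ (Orb_minimal x)) as [f [_ [Hf _]]].
  destruct (f x0) as [[y1 y2] [k Ek]] eqn:Ef.
  injection Ek as E1 E2.
  assert (Hfix : forall h, Hs G X act x0 h -> act h y1 = y1 /\ act h y2 = y2).
  { intros h' Hh'. pose proof (Hf h' x0) as E. unfold Hs in Hh'. rewrite Hh', Ef in E.
    unfold actO in E. apply (f_equal (@proj1_sig _ _)) in E. simpl in E.
    injection E as F1 F2. auto. }
  set (h' := mul (mul k h) (inv k)).
  assert (Hh' : Hs G X act x0 h').
  { apply (stab_conj G X T act x0 lX Hfl Hmin Hfull y1).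
    - intros h0 H0. apply Hfix; auto.
    - unfold h'. rewrite E1, !acomp', invl'. unfold Hs in Hh. rewrite Hh. reflexivity. }
  destruct (Hfix h' Hh') as [_ F2].
  unfold h' in F2. rewrite E2, !acomp', invl' in F2.
  apply (f_equal (act (inv k))) in F2. rewrite !invl' in F2. exact F2.
Qed.

Lemma Hs_normal : normal G (Hs G X act x0).
Proof.
  intros g h Hh. unfold Hs. rewrite !acomp', (Hs_trivial _ h Hh). apply (act_invr G X T act Hfl).
Qed.

End Forward3.

Definition prodT {A B} (TA : Topology A) (TB : Topology B) : Topology (A * B).
Proof.
  refine {| is_open := fun W => forall p, W p -> exists U V, is_open TA U /\ is_open TB V /\
             U (fst p) /\ V (snd p) /\ forall a b, U a -> V b -> W (a, b) |}.
  - intros p _. exists (fun _ => True), (fun _ => True). repeat split; try apply open_all.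
  - intros W1 W2 H1 H2 p [W1p W2p].
    destruct (H1 p W1p) as [U1 [V1 [? [? [? [? HW1]]]]]].
    destruct (H2 p W2p) as [U2 [V2 [? [? [? [? HW2]]]]]].
    exists (fun a => U1 a /\ U2 a), (fun b => V1 b /\ V2 b).
    repeat split; try apply open_inter; auto.
    + apply HW1; tauto.
    + apply HW2; tauto.
  - intros F HF p [W [FW Wp]].
    destruct (HF W FW p Wp) as [U [V [? [? [? [? HW]]]]]].
    exists U, V. repeat split; auto. intros a b Ua Vb. exists W. split; auto.
Defined.

Lemma prod_compact {A B} (TA : Topology A) (TB : Topology B) :
  compact TA -> compact TB -> compact (prodT TA TB).
Proof.
  intros cA cB F HF Fcov.
  assert (Step1 : forall a, exists Wa, is_open TA Wa /\ Wa a /\ exists lu,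
      (forall U, In U lu -> F U) /\ forall a' b, Wa a' -> exists U, In U lu /\ U (a', b)).
  { intro a.
    set (FB := fun V => is_open TB V /\ exists Ua, is_open TA Ua /\ Ua a /\ exists U, F U /\
                 forall a' b, Ua a' -> V b -> U (a', b)).
    destruct (cB FB) as [lv [Hlv Hcv]].
    - intros V [HV _]. exact HV.
    - intro b. destruct (Fcov (a, b)) as [U [FU Uab]].
      destruct (HF U FU (a, b) Uab) as [Ua [Vb [HUa [HVb [Uaa [Vbb HUV]]]]]].
      exists Vb. split; [split; [auto|exists Ua; split; [auto|split; [auto|exists U; auto]]]|auto].
    - assert (Hg : forall lv, (forall V, In V lv -> FB V) -> exists Wa, is_open TA Wa /\ Wa a /\
          exists lu, (forall U, In U lu -> F U) /\
          forall a' b, Wa a' -> (exists V, In V lv /\ V b) -> exists U, In U lu /\ U (a', b)).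
      { induction lv0 as [|V lv0 IH]; intro Hl.
        - exists (fun _ => True). split; [apply open_all|]. split; auto. exists [].
          split; [intros U []|]. intros a' b _ [V [[] _]].
        - destruct IH as [Wa [HWa [Waa [lu [Hlu Hc]]]]]. { intros V' HV'; apply Hl; right; auto. }
          destruct (Hl V (or_introl eq_refl)) as [HV [Ua [HUa [Uaa [U [FU HU]]]]]].
          exists (fun x => Wa x /\ Ua x). split; [apply open_inter; auto|]. split; [auto|].
          exists (U :: lu). split.
          + intros U' [<-|HU']; auto.
          + intros a' b [Wa' Ua'] [V' [[<-|HV'] V'b]].
            * exists U. split; [left; auto|]. apply HU; auto.
            * destruct (Hc a' b Wa' (ex_intro _ V' (conj HV' V'b))) as [U0 [HU0 U0ab]].
              exists U0. split; [right; auto|auto]. }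
      destruct (Hg lv Hlv) as [Wa [HWa [Waa [lu [Hlu Hc]]]]].
      exists Wa. split; [auto|split; [auto|exists lu; split; [auto|]]].
      intros a' b Wa'. apply Hc; auto. }
  set (FA := fun W => is_open TA W /\ exists lu, (forall U, In U lu -> F U) /\
                 forall a' b, W a' -> exists U, In U lu /\ U (a', b)).
  destruct (cA FA) as [lw [Hlw Hcw]].
  - intros W [HW _]; exact HW.
  - intro a. destruct (Step1 a) as [Wa [HWa [Waa Hlu]]]. exists Wa. split; auto. split; auto.
  - assert (Hg : forall lw, (forall W, In W lw -> FA W) -> exists lu, (forall U, In U lu -> F U) /\
        forall a b, (exists W, In W lw /\ W a) -> exists U, In U lu /\ U (a, b)).
    { induction lw0 as [|W lw0 IH]; intro Hl.
      - exists []. split; [intros U []|]. intros a b [W [[] _]].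
      - destruct IH as [lu [Hlu Hc]]. { intros W' HW'; apply Hl; right; auto. }
        destruct (Hl W (or_introl eq_refl)) as [HW [lu' [Hlu' Hc']]].
        exists (lu' ++ lu). split.
        + intros U HU. apply in_app_or in HU. destruct HU; auto.
        + intros a b [W' [[<-|HW'] W'a]].
          * destruct (Hc' a b W'a) as [U [HU Uab]]. exists U. split; auto. apply in_or_app; auto.
          * destruct (Hc a b (ex_intro _ W' (conj HW' W'a))) as [U [HU Uab]].
            exists U. split; auto. apply in_or_app; auto. }
    destruct (Hg lw Hlw) as [lu [Hlu Hc]].
    exists lu. split; auto. intros [a b]. apply Hc. apply Hcw.
Qed.

Lemma image_compact {A B} (TA : Topology A) (TB : Topology B) (f : A -> B) :
  compact TA -> continuous TA TB f -> (forall b, exists a, f a = b) -> compact TB.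
Proof.
  intros cA cf sf F HF Fcov.
  set (FA := fun U => exists V, F V /\ U = (fun a => V (f a))).
  destruct (cA FA) as [lu [Hlu Hc]].
  - intros U [V [FV ->]]. apply cf. auto.
  - intro a. destruct (Fcov (f a)) as [V [FV Vfa]]. exists (fun a => V (f a)). split; auto.
    exists V; auto.
  - assert (Hg : forall lu, (forall U, In U lu -> FA U) -> exists lv, (forall V, In V lv -> F V) /\
        forall a, (exists U, In U lu /\ U a) -> exists V, In V lv /\ V (f a)).
    { induction lu0 as [|U lu0 IH]; intro Hl.
      - exists []. split; [intros V []|]. intros a [U [[] _]].
      - destruct IH as [lv [Hlv Hcv]]. { intros U' HU'; apply Hl; right; auto. }
        destruct (Hl U (or_introl eq_refl)) as [V [FV EU]].
        exists (V :: lv). split.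
        + intros V' [<-|HV']; auto.
        + intros a [U' [[<-|HU'] U'a]].
          * exists V. split; [left; auto|]. rewrite EU in U'a. auto.
          * destruct (Hcv a (ex_intro _ U' (conj HU' U'a))) as [V0 [HV0 V0a]].
            exists V0. split; [right|]; auto. }
    destruct (Hg lu Hlu) as [lv [Hlv Hcv]]. exists lv. split; auto.
    intro b. destruct (sf b) as [a <-]. apply Hcv. apply Hc.
Qed.

Section Pow.
Variables (Y : Type) (TY : Topology Y) (y0 : Y).

Definition Zt (n : nat) := {z : nat -> Y | forall j, n <= j -> z j = y0}.

Definition ZT (n : nat) : Topology (Zt n).
Proof.
  refine {| is_open := fun W => forall z, W z -> exists V : nat -> Y -> Prop,
      (forall j, j < n -> is_open TY (V j) /\ V j (proj1_sig z j)) /\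
      forall z', (forall j, j < n -> V j (proj1_sig z' j)) -> W z' |}.
  - intros z _. exists (fun _ _ => True). split; auto. intros j _. split; auto. apply open_all.
  - intros W1 W2 H1 H2 z [W1z W2z].
    destruct (H1 z W1z) as [V1 [HV1 HW1]]. destruct (H2 z W2z) as [V2 [HV2 HW2]].
    exists (fun j y => V1 j y /\ V2 j y). split.
    + intros j Hj. destruct (HV1 j Hj), (HV2 j Hj). split; auto. apply open_inter; auto.
    + intros z' Hz'. split; [apply HW1|apply HW2]; intros j Hj; apply Hz'; auto.
  - intros F HF z [W [FW Wz]]. destruct (HF W FW z Wz) as [V [HV HW]].
    exists V. split; auto. intros z' Hz'. exists W. auto.
Defined.

Lemma box_open n (V : nat -> Y -> Prop) :
  (forall j, j < n -> is_open TY (V j)) -> is_open (ZT n) (fun z => forall j, j < n -> V j (proj1_sig z j)).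
Proof.
  intros HV z Hz. exists V. split; [intros j Hj; split; auto|auto].
Qed.

Definition upd_fun (n : nat) (z : nat -> Y) (y : Y) : nat -> Y :=
  fun j => if Nat.eq_dec j n then y else z j.

Lemma upd_ok n (p : Zt n * Y) : forall j, S n <= j -> upd_fun n (proj1_sig (fst p)) (snd p) j = y0.
Proof.
  intros j Hj. unfold upd_fun. destruct (Nat.eq_dec j n); [lia|]. apply (proj2_sig (fst p)). lia.
Qed.

Definition upd n (p : Zt n * Y) : Zt (S n) := exist _ _ (upd_ok n p).

Lemma Zt_compact : compact TY -> forall n, compact (ZT n).
Proof.
  intros cY n. induction n as [|n IH].
  - assert (Hz : forall j, 0 <= j -> (fun _ : nat => y0) j = y0) by auto.
    apply (compact_of_list _ [exist _ _ Hz]). intro z. left. apply sig_eq. simpl.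
    apply functional_extensionality. intro j. symmetry. apply (proj2_sig z). lia.
  - apply (image_compact (prodT (ZT n) TY) (ZT (S n)) (upd n)).
    + apply prod_compact; auto.
    + intros W HW [z y] Wzy.
      destruct (HW _ Wzy) as [V [HV HWV]].
      exists (fun z' : Zt n => forall j, j < n -> V j (proj1_sig z' j)), (V n).
      split; [apply box_open; intros j Hj; apply HV; lia|].
      split; [apply HV; lia|].
      split; [|split].
      * intros j Hj. simpl. destruct (HV j ltac:(lia)) as [_ Hv]. simpl in Hv.
        unfold upd_fun in Hv. destruct (Nat.eq_dec j n); [lia|auto].
      * simpl. destruct (HV n ltac:(lia)) as [_ Hv]. simpl in Hv.
        unfold upd_fun in Hv. destruct (Nat.eq_dec n n); [auto|lia].
      * intros a b Ha Vb. apply HWV. intros j Hj. simpl. unfold upd_fun.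
        destruct (Nat.eq_dec j n) as [->|Hne]; auto. apply Ha. lia.
    + intro w.
      assert (Hz : forall j, n <= j -> (fun j => if Nat.eq_dec j n then y0 else proj1_sig w j) j = y0).
      { intros j Hj. destruct (Nat.eq_dec j n); auto. apply (proj2_sig w). lia. }
      exists (exist _ _ Hz, proj1_sig w n). apply sig_eq. simpl.
      apply functional_extensionality. intro j. unfold upd_fun.
      destruct (Nat.eq_dec j n) as [->|]; auto.
Qed.

Lemma Zt_hausdorff : hausdorff TY -> forall n, hausdorff (ZT n).
Proof.
  intros hY n z z' Hne.
  assert (Hj : exists j, j < n /\ proj1_sig z j <> proj1_sig z' j).
  { apply NNPP. intro Hc. apply Hne. apply sig_eq. apply functional_extensionality. intro j.
    destruct (le_lt_dec n j).
    - rewrite (proj2_sig z j), (proj2_sig z' j); auto.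
    - apply NNPP. intro Hd. apply Hc. exists j; auto. }
  destruct Hj as [j [Hj Hd]].
  destruct (hY _ _ Hd) as [U1 [U2 [HU1 [HU2 [U1z [U2z Hdis]]]]]].
  set (V := fun (U : Y -> Prop) k => if Nat.eq_dec k j then U else (fun _ : Y => True)).
  exists (fun w : Zt n => forall k, k < n -> V U1 k (proj1_sig w k)),
         (fun w : Zt n => forall k, k < n -> V U2 k (proj1_sig w k)).
  split; [apply box_open; intros k _; unfold V; destruct (Nat.eq_dec k j); auto; apply open_all|].
  split; [apply box_open; intros k _; unfold V; destruct (Nat.eq_dec k j); auto; apply open_all|].
  split; [intros k _; unfold V; destruct (Nat.eq_dec k j) as [->|]; auto|].
  split; [intros k _; unfold V; destruct (Nat.eq_dec k j) as [->|]; auto|].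
  intros w H1 H2. specialize (H1 j Hj). specialize (H2 j Hj). unfold V in H1, H2.
  destruct (Nat.eq_dec j j); [|lia]. exact (Hdis _ H1 H2).
Qed.
End Pow.

Lemma my_zorn (T : Type) (P : (T -> Prop) -> Prop) :
  (forall F : (T -> Prop) -> Prop, (forall X, F X -> P X) ->
     (forall X Y, F X -> F Y -> (forall z, X z -> Y z) \/ (forall z, Y z -> X z)) ->
     P (fun z => exists X, F X /\ X z)) ->
  exists A, P A /\ forall B, (forall z, A z -> B z) -> P B -> forall z, B z -> A z.
Proof.
  intro H.
  destruct (@classical_sets.Zorn_bigcup T P) as [A [PA Amax]].
  - intros F FP Ftot.
    replace (classical_sets.bigcup F (fun X => X)) with (fun z => exists X, F X /\ X z).
    + apply H; [exact FP|]. intros X Y FX FY. destruct (Ftot X Y FX FY); [left|right]; auto.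
    + apply boolp.funext. intro z. apply boolp.propext. split.
      * intros [X [FX Xz]]. exists X; auto.
      * intros [X FX Xz]. exists X; auto.
  - exists A. split; auto. intros B AB PB z Bz.
    apply NNPP. intro nAz. apply (Amax B); [split; [exact AB|]|exact PB]. intro BA. apply nAz. apply BA; auto.
Qed.
Section MinSub.
Variables (G : TopGroup) (Z : Type) (TZ : Topology Z) (actZ : G -> Z -> Z).
Hypothesis (HZ : G_flow G Z TZ actZ).

Definition subT (C : Z -> Prop) : Topology {z | C z}.
Proof.
  refine {| is_open := fun U => exists V, is_open TZ V /\ forall m, U m <-> V (proj1_sig m) |}.
  - exists (fun _ => True). split; [apply open_all|]. tauto.
  - intros U1 U2 [V1 [HV1 E1]] [V2 [HV2 E2]]. exists (fun z => V1 z /\ V2 z).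
    split; [apply open_inter; auto|]. intro m. rewrite E1, E2. tauto.
  - intros F HF.
    exists (fun z => exists V, (is_open TZ V /\ exists U, F U /\ forall m, U m <-> V (proj1_sig m)) /\ V z).
    split.
    + apply open_union. intros V [HV _]; exact HV.
    + intro m. split.
      * intros [U [FU Um]]. destruct (HF U FU) as [V [HV E]]. exists V. split; [split; [auto|exists U; auto]|].
        apply E; auto.
      * intros [V [[HV [U [FU E]]] Vm]]. exists U. split; auto. apply E; auto.
Defined.

Lemma minimal_subflow : exists (C : Z -> Prop) (actM : G -> {z | C z} -> {z | C z}),
  minimal_flow G {z | C z} (subT C) actM /\ forall g m, proj1_sig (actM g m) = actZ g (proj1_sig m).
Proof.
  destruct HZ as [[z0] [cZ [hZ [a1 [acomp acont]]]]].
  set (P := fun U : Z -> Prop => is_open TZ U /\ (forall g z, ~ U z -> ~ U (actZ g z)) /\ exists z, ~ U z).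
  destruct (my_zorn Z P) as [A [[HA [Ainv [za nAza]]] Amax]].
  { intros F FP Ftot. split; [|split].
    - apply open_union. intros U FU. apply (FP U FU).
    - intros g z Hz [U [FU Ug]]. apply Hz. exfalso.
      apply (proj1 (proj2 (FP U FU)) g z); auto. intro Uz. apply Hz. exists U; auto.
    - apply NNPP. intro Hall.
      assert (Hcov : forall z, exists U, F U /\ U z).
      { intro z. apply NNPP. intro Hn. apply Hall. exists z. auto. }
      destruct (cZ F (fun U FU => proj1 (FP U FU)) Hcov) as [lu [Hlu Hc]].
      assert (Hmax : forall lu, (forall U, In U lu -> F U) -> lu = [] \/
                 exists M, F M /\ forall U, In U lu -> forall z, U z -> M z).
      { induction lu0 as [|U lu0 IH]; intro Hl; [left; auto|right].
        destruct (IH (fun U' HU' => Hl U' (or_intror HU'))) as [->|[M [FM HM]]].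
        - exists U. split; [apply Hl; left; auto|]. intros U' [<-|[]]. auto.
        - destruct (Ftot U M (Hl U (or_introl eq_refl)) FM) as [HUM|HMU].
          + exists M. split; [exact FM|]. intros U' [<-|HU']; [exact HUM|exact (HM U' HU')].
          + exists U. split; [apply Hl; left; auto|]. intros U' [<-|HU'] z Hz; [exact Hz|].
            apply HMU. exact (HM U' HU' z Hz). }
      destruct (Hmax lu Hlu) as [->|[M [FM HM]]].
      + destruct (Hc z0) as [U [[] _]].
      + destruct (proj2 (proj2 (FP M FM))) as [z Hz]. apply Hz.
        destruct (Hc z) as [U [HU Uz]]. apply (HM U HU z Uz). }
  set (C := fun z => ~ A z).
  assert (Cinv : forall g z, C z -> C (actZ g z)) by (intros; apply Ainv; auto).
  exists C, (fun g m => exist _ (actZ g (proj1_sig m)) (Cinv g _ (proj2_sig m))).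
  split; [|intros; reflexivity].
  split; [split; [|split; [|split; [|split; [|split]]]]|].
  - constructor. exists za. exact nAza.
  -
    intros F HF Fcov.
    set (FZ := fun V => is_open TZ V /\ ((exists U, F U /\ forall m, U m <-> V (proj1_sig m)) \/ V = A)).
    destruct (cZ FZ) as [lv [Hlv Hcv]].
    + intros V [HV _]; exact HV.
    + intro z. destruct (classic (A z)) as [Az|nAz].
      * exists A. split; auto. split; auto.
      * destruct (Fcov (exist _ z nAz)) as [U [FU Uz]]. destruct (HF U FU) as [V [HV E]].
        exists V. split; [split; [auto|left; exists U; auto]|]. exact (proj1 (E _) Uz).
    + assert (Hg : forall lv, (forall V, In V lv -> FZ V) -> exists lu, (forall U, In U lu -> F U) /\
          forall m : {z | C z}, (exists V, In V lv /\ V (proj1_sig m)) -> exists U, In U lu /\ U m).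
      { induction lv0 as [|V lv0 IH]; intro Hl.
        - exists []. split; [intros U []|]. intros m [V [[] _]].
        - destruct (IH (fun V' HV' => Hl V' (or_intror HV'))) as [lu [Hlu Hc]].
          destruct (Hl V (or_introl eq_refl)) as [HV [[U [FU E]]|EA]].
          + exists (U :: lu). split; [intros U' [<-|HU']; auto|].
            intros m [V' [[<-|HV'] V'm]].
            * exists U. split; [left; auto|]. apply E; auto.
            * destruct (Hc m (ex_intro _ V' (conj HV' V'm))) as [U0 [HU0 U0m]].
              exists U0. split; [right|]; auto.
          + exists lu. split; auto. intros m [V' [[<-|HV'] V'm]].
            * exfalso. subst V. apply (proj2_sig m). exact V'm.
            * apply Hc. exists V'. auto. }
      destruct (Hg lv Hlv) as [lu [Hlu Hc]]. exists lu. split; [exact Hlu|].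
      intro m. apply Hc. apply Hcv.
  - intros m m' Hne.
    assert (Hne' : proj1_sig m <> proj1_sig m') by (intro E; apply Hne; apply sig_eq; auto).
    destruct (hZ _ _ Hne') as [U1 [U2 [HU1 [HU2 [U1m [U2m Hd]]]]]].
    exists (fun w => U1 (proj1_sig w)), (fun w => U2 (proj1_sig w)).
    split; [exists U1; split; [auto|tauto]|].
    split; [exists U2; split; [auto|tauto]|].
    split; [auto|split; [auto|]]. intros w; apply Hd.
  - intro m. apply sig_eq. simpl. apply a1.
  - intros g h m _ _. apply sig_eq. simpl. apply acomp; exact I.
  - intros g m W _ [VW [HVW EW]] HWm. apply EW in HWm. simpl in HWm.
    destruct (acont g (proj1_sig m) VW I HVW HWm) as [U [V [HU [HV [Ug [Vm HUV]]]]]].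
    exists U, (fun w => V (proj1_sig w)). split; [auto|].
    split; [exists V; split; [auto|tauto]|]. split; [auto|split; [auto|]].
    intros g' m' _ Ug' Vm'. apply EW. simpl. apply HUV; auto.
  -
    intros B [V [HV EV]] [m0 Bm0] Binv m.
    set (B' := fun z => C z /\ ~ V z).
    assert (HB' : forall z, C z -> B' z).
    { apply NNPP. intro Hn.
      assert (Hsub : forall z, A z -> ~ B' z) by (intros z Az [Cz _]; exact (Cz Az)).
      apply Hn. intros z Cz. apply NNPP. intro nB'z.
      apply Cz. apply (Amax (fun z => ~ B' z) Hsub).
      - split; [|split].
        + apply open_local. intros w Hw. destruct (classic (A w)) as [Aw|nAw].
          * exists A. split; [exact HA|split; [exact Aw|]]. intros y Ay [Cy _]. exact (Cy Ay).
          * assert (Vw : V w) by (apply NNPP; intro nVw; apply Hw; split; auto).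
            exists V. split; [exact HV|split; [exact Vw|]]. intros y Vy [_ nVy]. exact (nVy Vy).
        + intros g w Hw Hgw. apply Hgw. apply NNPP in Hw. destruct Hw as [Cw nVw].
          assert (Bw : B (exist _ w Cw)) by (apply NNPP; intro nB; apply nVw; apply (proj1 (EV _)) in nB; exact nB).
          apply Binv with (g := g) in Bw. split; [apply Cinv; auto|].
          intro Vgw. exact (proj2 (EV (exist _ (actZ g w) (Cinv g w Cw))) Vgw Bw).
        + exists (proj1_sig m0). intro Hn0. apply Hn0. split; [apply (proj2_sig m0)|].
          intro Vm0. exact (proj2 (EV m0) Vm0 Bm0).
      - exact nB'z. }
    destruct (HB' (proj1_sig m) (proj2_sig m)) as [_ nVm].
    apply NNPP. intro nB. apply nVm. apply (proj1 (EV m)). exact nB.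
Qed.
End MinSub.

Lemma open_right_trans (G : TopGroup) (a : G) (P : G -> Prop) :
  is_open (top G) P -> is_open (top G) (fun g => P (mul g a)).
Proof.
  intro HP. apply open_local. intros g Hg.
  destruct (mul_cont G g a P HP Hg) as [U [V [HU [_ [Ug [Va HUV]]]]]].
  exists U. split; auto.
Qed.

Lemma fin_inter {X} (T : Topology X) (P : nat -> X -> Prop) n :
  (forall j, j < n -> is_open T (P j)) -> is_open T (fun x => forall j, j < n -> P j x).
Proof.
  induction n as [|n IH]; intro HP.
  - eapply open_ext; [|apply open_all]. intro x; split; auto. intros _ j Hj; lia.
  - eapply open_ext; [|apply open_inter; [apply IH; intros j Hj; apply HP; lia|apply (HP n); lia]].
    intro x. split.
    + intros [H1 H2] j Hj. destruct (Nat.eq_dec j n) as [->|]; auto. apply H1; lia.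
    + intro Hx. split; auto.
Qed.

Lemma fin_choice {A} (a0 : A) (Q : nat -> A -> Prop) n :
  (forall j, j < n -> exists x, Q j x) -> exists f : nat -> A, forall j, j < n -> Q j (f j).
Proof.
  induction n as [|n IH]; intro HQ.
  - exists (fun _ => a0). intros; lia.
  - destruct IH as [f Hf]. { intros j Hj; apply HQ; lia. }
    destruct (HQ n ltac:(lia)) as [x Hx].
    exists (fun j => if Nat.eq_dec j n then x else f j). intros j Hj.
    destruct (Nat.eq_dec j n) as [->|]; auto. apply Hf; lia.
Qed.

Section Induced.
Variables (G : TopGroup) (H : G -> Prop) (d : nat) (l : list G).
Hypotheses (Hsub : subgroup G H) (Hlen : length l = d)
  (Hcov : forall g, exists r, In r l /\ H (mul (inv r) g))
  (Hdis : forall i j, i < d -> j < d -> H (mul (inv (nth i l one)) (nth j l one)) -> i = j)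
  (Hnorm : normal G H) (Hopen : is_open (top G) H).
Variables (Y : Type) (TY : Topology Y) (actY : G -> Y -> Y) (y0 : Y).
Hypothesis (HY : is_flow G H Y TY actY).

Let pk := pick G H d l Hlen Hcov.
Let pcomp := pick_comp G H d l Hsub Hlen Hcov Hdis.
Let peq := pick_eq G H d l Hsub Hlen Hcov Hdis.
Let prr := pick_rr G H d l Hsub Hlen Hcov Hdis.
Let pH := pick_H G H d l Hlen Hcov.
Let plt := pick_lt G H d l Hlen Hcov.
Let r := rr G l.

Definition idx (g : G) (j : nat) : nat := pk (mul (inv g) (r j)).
Definition cc (g : G) (j : nat) : G := mul (mul (inv (r j)) g) (r (idx g j)).

Lemma cc_H g j : H (cc g j).
Proof.
  pose proof (proj2 (proj2 Hsub) _ (pH (mul (inv g) (r j)))) as Hi.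
  rewrite invM, invM, !invK in Hi. unfold cc, idx. exact Hi.
Qed.

Definition Zd := Zt Y y0 d.
Definition TZd := ZT Y TY y0 d.

Definition actZ_fun (g : G) (z : Zd) : nat -> Y :=
  fun j => if lt_dec j d then actY (cc g j) (proj1_sig z (idx g j)) else y0.
Lemma actZ_ok g z : forall j, d <= j -> actZ_fun g z j = y0.
Proof. intros j Hj. unfold actZ_fun. destruct (lt_dec j d); [lia|auto]. Qed.
Definition actZ (g : G) (z : Zd) : Zd := exist _ _ (actZ_ok g z).

Lemma idx_one j : j < d -> idx one j = j.
Proof. intro Hj. unfold idx. rewrite inv1, mul1g. apply prr; auto. Qed.

Lemma idx_comp g h j : idx h (idx g j) = idx (mul g h) j.
Proof.
  unfold idx. fold r. unfold pk. rewrite pcomp, invM, mulA. reflexivity.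
Qed.

Lemma cc_comp g h j : cc (mul g h) j = mul (cc g j) (cc h (idx g j)).
Proof.
  unfold cc. rewrite <- idx_comp. rewrite <- (mulA _ (inv (r (idx g j)))), mul_cancel_mid, !mulA. reflexivity.
Qed.

Lemma idx_near g g' j : H (mul (inv g) g') -> idx g' j = idx g j.
Proof.
  intro Hg. unfold idx at 1. apply peq; [apply plt|].
  set (k := idx g j). set (h := inv (mul (inv g) g')).
  assert (Hh : H h) by (apply (proj2 (proj2 Hsub)); auto).
  assert (Ek : H (mul (inv (r k)) (mul (inv g) (r j)))) by apply pH.
  replace (mul (inv g') (r j)) with (mul h (mul (inv g) (r j))).
  - replace (mul (inv (rr G l k)) (mul h (mul (inv g) (r j)))) with
      (mul (mul (mul (inv (r k)) h) (r k)) (mul (inv (r k)) (mul (inv g) (r j)))).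
    + apply (proj1 (proj2 Hsub)); auto.
      pose proof (Hnorm (inv (r k)) h Hh) as Hn. rewrite invK in Hn. exact Hn.
    + rewrite mul_cancel_mid, <- mulA. reflexivity.
  - unfold h. rewrite invM, invK, mul_cancel_mid. reflexivity.
Qed.

Lemma actZ_flow : G_flow G Zd TZd actZ.
Proof.
  destruct HY as [inhY [cY [hY [a1Y [acY contY]]]]].
  assert (Hz0 : forall j, d <= j -> (fun _ : nat => y0) j = y0) by auto.
  split; [|split; [|split; [|split; [|split]]]].
  - constructor. exact (exist _ _ Hz0).
  - apply Zt_compact; auto.
  - apply Zt_hausdorff; auto.
  - intro z. apply sig_eq. apply functional_extensionality. intro j. simpl. unfold actZ_fun.
    destruct (lt_dec j d) as [Hj|Hj].
    + unfold cc. rewrite idx_one, mulg1, mulVg, a1Y by auto. reflexivity.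
    + symmetry. apply (proj2_sig z). lia.
  - intros g h z _ _. apply sig_eq. apply functional_extensionality. intro j. simpl. unfold actZ_fun.
    destruct (lt_dec j d) as [Hj|Hj]; auto.
    rewrite cc_comp, acY by apply cc_H. simpl. unfold actZ_fun.
    destruct (lt_dec (idx g j) d) as [Hi|Hi]; [|exfalso; apply Hi; apply plt].
    rewrite idx_comp. reflexivity.
  - intros g z W _ HW HWz.
    destruct (HW _ HWz) as [V [HV HWV]].
    set (Q := fun (j : nat) (p : prod (G -> Prop) (Y -> Prop)) => is_open (top G) (fst p) /\ is_open TY (snd p) /\
       fst p (cc g j) /\ snd p (proj1_sig z (idx g j)) /\
       forall g' y', H g' -> fst p g' -> snd p y' -> V j (actY g' y')).
    destruct (fin_choice (fun _ => True, fun _ => True) Q d) as [f Hf].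
    { intros j Hj. destruct (HV j Hj) as [HVj Vj]. simpl in Vj. unfold actZ_fun in Vj.
      destruct (lt_dec j d) as [_|]; [|lia].
      destruct (contY (cc g j) (proj1_sig z (idx g j)) (V j) (cc_H g j) HVj Vj)
        as [U [Ve [HU [HVe [Ug [Vez HUV]]]]]].
      exists (U, Ve). unfold Q; simpl. repeat split; auto. }
    exists (fun g' => H (mul (inv g) g') /\
              forall j, j < d -> fst (f j) (mul (mul (inv (r j)) g') (r (idx g j)))),
           (fun z' : Zd => forall k, k < d -> (fun k y => forall j, j < d -> idx g j = k -> snd (f j) y) k (proj1_sig z' k)).
    split; [|split; [|split; [|split]]].
    + apply open_inter; [apply open_left_trans; auto|].
      apply fin_inter. intros j Hj.
      apply (open_left_trans G (inv (r j)) (fun y => fst (f j) (mul y (r (idx g j))))).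
      apply (open_right_trans G (r (idx g j)) (fun x => fst (f j) x)). apply (Hf j Hj).
    + apply (box_open Y TY y0 d (fun k y => forall j, j < d -> idx g j = k -> snd (f j) y)). intros k Hk. apply fin_inter. intros j Hj.
      destruct (classic (idx g j = k)) as [E|E].
      * eapply open_ext; [|apply (Hf j Hj)]. intro y. simpl. split; auto.
      * eapply open_ext; [|apply open_all]. intro y. split; auto. intros _ E'. contradiction.
    + split; [rewrite mulVg; apply Hsub|]. intros j Hj. apply (Hf j Hj).
    + intros k Hk j Hj <-. apply (Hf j Hj).
    + intros g' z' _ [Hg' HU] HVz. apply HWV. intros j Hj. simpl. unfold actZ_fun.
      destruct (lt_dec j d) as [_|]; [|lia].
      rewrite (idx_near g g' j Hg').
      apply (proj2 (proj2 (proj2 (proj2 (Hf j Hj))))).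
      * apply cc_H.
      * unfold cc. rewrite (idx_near g g' j Hg'). apply HU; auto.
      * apply (HVz (idx g j) (plt _) j Hj eq_refl).
Qed.

Variables (X : Type) (TX : Topology X) (actX : G -> X -> X) (x0 : X).
Hypotheses (Hstab : forall h, H h -> actX h x0 = x0)
  (Huniv : forall (M : Type) (TM : Topology M) (actM : G -> M -> M),
    minimal_flow G M TM actM ->
    exists f : X -> M, continuous TX TM f /\
      (forall g x, f (actX g x) = actM g (f x)) /\ (forall y, exists x, f x = y)).

Lemma ea_fixed : exists y, forall h, H h -> actY h y = y.
Proof.
  destruct (minimal_subflow G Zd TZd actZ actZ_flow) as [C [actM [HM Hemb]]].
  destruct (Huniv _ _ _ HM) as [f [_ [Hf _]]].
  set (m := f x0).
  assert (Hm : forall h, H h -> actZ h (proj1_sig m) = proj1_sig m).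
  { intros h Hh. rewrite <- Hemb. f_equal. unfold m. rewrite <- Hf, Hstab; auto. }
  set (j0 := pk one).
  assert (Hr0 : H (r j0)).
  { pose proof (pH one) as E. rewrite mulg1 in E. apply (proj2 (proj2 Hsub)) in E.
    rewrite invK in E. exact E. }
  exists (proj1_sig (proj1_sig m) j0).
  intros h' Hh'. set (h := mul (mul (r j0) h') (inv (r j0))).
  assert (Hh : H h).
  { apply (proj1 (proj2 Hsub)); [apply (proj1 (proj2 Hsub)); auto|apply (proj2 (proj2 Hsub)); auto]. }
  pose proof (f_equal (fun z : Zd => proj1_sig z j0) (Hm h Hh)) as E. simpl in E. unfold actZ_fun in E.
  destruct (lt_dec j0 d) as [_|Hn]; [|exfalso; apply Hn; apply plt].
  assert (Eidx : idx h j0 = j0).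
  { unfold idx. apply peq; [apply plt|].
    apply (proj1 (proj2 Hsub)); [apply (proj2 (proj2 Hsub)); auto|].
    apply (proj1 (proj2 Hsub)); [apply (proj2 (proj2 Hsub)); auto|auto]. }
  assert (Ecc : cc h j0 = h').
  { unfold cc. rewrite Eidx. unfold h. rewrite !mulA, mulVg, mul1g, <- mulA, mulVg, mulg1. reflexivity. }
  rewrite Eidx, Ecc in E. exact E.
Qed.

End Induced.

Theorem mainTheorem7 (G : TopGroup) (d : nat) (hd : 1 <= d) :
  UMF_card G d <->
  exists H : G -> Prop,
    subgroup G H /\ is_open (top G) H /\ normal G H /\
    index_eq G H d /\ extremely_amenable G H.
Proof.
  split.
  - intros [X [T [act [[[Hfl Hmin] Hu] [lX [HN [HL Hfull]]]]]]].
    destruct (proj1 Hfl) as [x0].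
    pose proof (Hs_sub G X T act x0 Hfl) as Hsub.
    pose proof (Hs_open G X T act x0 lX Hfl Hfull) as Hop.
    pose proof (Hs_normal G X T act x0 lX Hfl Hmin Hfull Hu) as Hno.
    pose proof (Hs_index G X T act x0 lX d Hfl Hmin Hfull HN HL) as Hix.
    exists (Hs G X act x0). split; [auto|split; [auto|split; [auto|split; [auto|]]]].
    intros Y TY actY HY. destruct (proj1 HY) as [y0].
    destruct Hix as [l [Hlen [Hcov Hdis]]].
    apply (ea_fixed G _ d l Hsub Hlen Hcov Hdis Hno Hop Y TY actY y0 HY X T act x0); auto.
  - intros [H [Hsub [Hopen [Hnorm [[l [Hlen [Hcov Hdis]]] Hea]]]]].
    apply (backward G H d l hd Hsub Hlen Hcov Hdis Hopen Hnorm Hea).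
Qed.
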